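(* Let $G$ be a finite group of full exponent. Then the co-prime graph $\Gamma_{CP}(G)$ is minimally edge connected if and only if $G$ is a $p$-group for some prime $p$.
   Context: The co-prime graph $\Gamma_{CP}(G)$ of a finite group $G$ is the simple undirected graph with vertex set $G$ in which two distinct elements $x,y$ are adjacent if and only if $\gcd(o(x),o(y))=1$. $G$ is of full exponent if it contains an element whose order equals the exponent of $G$. A $p$-group is a group of order $p^n$ for a prime $p$. For a connected graph $\Gamma$, an edge cut-set is a set $S$ of edges such that $\Gamma-S$ is disconnected or has just one vertex, and the edge connectivity $\kappa'(\Gamma)$ is the smallest size of an edge cut-set. $\Gamma$ is minimally edge connected if $\kappa'(\Gamma-\epsilon)=\kappa'(\Gamma)-1$ for every edge $\epsilon$ of $\Gamma$. *)

(* Defs.v *)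
From mathcomp Require Import all_boot all_fingroup all_solvable.
Set Implicit Arguments. Unset Strict Implicit. Unset Printing Implicit Defensive.


(* Simple graphs on a finite vertex type T, given by their edge set:
   a set of 2-element subsets {x, y} of T. *)

Definition coprime_edges (gT : finGroupType) : {set {set gT}} :=
  [set e : {set gT} | [exists x : gT, exists y : gT,
      [&& x != y, e == [set x; y] & coprime #[x]%g #[y]%g]]].

Definition adj (T : finType) (E : {set {set T}}) : rel T :=
  fun x y => [set x; y] \in E.

Definition graph_connected (T : finType) (E : {set {set T}}) : bool :=
  [forall x : T, forall y : T, connect (adj E) x y].

Definition edge_cutset (T : finType) (E S : {set {set T}}) : bool :=
  (S \subset E) && (~~ graph_connected (E :\: S) || (#|T| == 1%N)).

(* edge connectivity: smallest size of an edge cut-set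
   (E itself is always an edge cut-set, so #|E| is a valid start value) *)
Definition edge_connectivity (T : finType) (E : {set {set T}}) : nat :=
  \big[minn/#|E|]_(S in powerset E | edge_cutset E S) #|S|.

Definition minimally_edge_connected (T : finType) (E : {set {set T}}) : Prop :=
  forall e, e \in E -> edge_connectivity (E :\ e) = (edge_connectivity E).-1.

Definition full_exponent (gT : finGroupType) (G : {set gT}) : Prop :=
  exists2 x, x \in G & #[x]%g = exponent G.

(* Main.v *)
Require Import Defs.
From mathcomp Require Import all_boot all_fingroup all_solvable.
From Stdlib Require Import Classical.
Set Implicit Arguments. Unset Strict Implicit. Unset Printing Implicit Defensive.

Section Gen.
Variable T : finType.

Lemma ec_le (E S : {set {set T}}) :
  S \subset E -> edge_cutset E S -> edge_connectivity E <= #|S|.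
Proof.
move=> sSE cS; rewrite /edge_connectivity.
have: S \in index_enum {set {set T}} by rewrite mem_index_enum.
have: (S \in powerset E) && edge_cutset E S by rewrite powersetE sSE.
elim: (index_enum _) => [|a r IH] PS //=.
rewrite inE big_cons; case/orP=> [/eqP <-|Sr]; first by rewrite PS geq_minl.
case: ifP => _; last exact: IH.
by rewrite geq_min IH // orbT.
Qed.

Lemma ec_gt0 (E : {set {set T}}) :
  0 < #|E| -> graph_connected E -> 1 < #|T| -> 0 < edge_connectivity E.
Proof.
move=> E0 cE T1; rewrite /edge_connectivity.
apply: (big_ind (fun n => 0 < n)) => //.
  by move=> a b; rewrite leq_min => -> ->.
move=> S /andP[_ /andP[_ C]]; rewrite card_gt0; apply/negP => /eqP S0.
move: C; rewrite S0 setD0 cE /=; by rewrite gtn_eqF.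
Qed.

Lemma isolated_disc (E : {set {set T}}) (y w : T) :
  (forall z, ~~ adj E y z) -> y != w -> ~~ graph_connected E.
Proof.
move=> nz yw; apply/negP => /forallP /(_ y) /forallP /(_ w) /connectP [[|z p] /= P L].
  by rewrite L eqxx in yw.
by move: P => /andP[yz _]; move: (nz z); rewrite yz.
Qed.

Lemma ec_le1 (E : {set {set T}}) (e : {set T}) :
  e \in E -> edge_cutset E [set e] -> edge_connectivity E <= 1.
Proof.
move=> eE c; rewrite -(cards1 e); apply: ec_le => //; by rewrite sub1set.
Qed.

End Gen.

Section Grp.
Variable gT : finGroupType.

Lemma coprime_edgeP (x y : gT) :
  ([set x; y] \in coprime_edges gT) = (x != y) && coprime #[x]%g #[y]%g.
Proof.
rewrite inE; apply/existsP/andP.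
  move=> [a /existsP [b /and3P [ab /eqP E C]]].
  have xa : x \in [set a; b] by rewrite -E set21.
  have ya : y \in [set a; b] by rewrite -E set22.
  have ax : a \in [set x; y] by rewrite E set21.
  have bx : b \in [set x; y] by rewrite E set22.
  move: xa ya ax bx; rewrite !inE.
  case/orP=> /eqP Ex; case/orP=> /eqP Ey; subst x y => ax bx;
    rewrite ?orbb in ax bx.
  - by move/eqP: bx => Eb; rewrite Eb eqxx in ab.
  - by rewrite ab C.
  - by rewrite eq_sym ab coprime_sym C.
  - by move/eqP: ax => Ea; rewrite Ea eqxx in ab.
move=> [xy C]; exists x; apply/existsP; exists y; by rewrite xy eqxx C.
Qed.

Lemma one_edge (y : gT) : y != 1%g -> [set 1%g; y] \in coprime_edges gT.
Proof. by move=> y1; rewrite coprime_edgeP eq_sym y1 order1 coprime1n. Qed.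

Lemma connected_via1 (E : {set {set gT}}) :
  (forall u, u != 1%g -> [set u; 1%g] \in E /\ [set 1%g; u] \in E) ->
  graph_connected E.
Proof.
move=> H; apply/forallP => u; apply/forallP => v.
apply: (@connect_trans _ _ 1%g).
  case: (eqVneq u 1%g) => [->|u1] //; apply: connect1; exact: (H u u1).1.
case: (eqVneq v 1%g) => [->|v1] //; apply: connect1; exact: (H v v1).2.
Qed.


Lemma iso (w : gT) :
  (forall z : gT, coprime #[w]%g #[z]%g -> z = 1%g) ->
  forall z, ~~ adj (coprime_edges gT :\ [set w; 1%g]) w z.
Proof.
move=> H z; rewrite /adj in_setD1 coprime_edgeP; apply/negP.
case/andP=> ne /andP[wz C]; move: ne; by rewrite (H z C) eqxx.
Qed.

Lemma pair_ne (u a b : gT) : a != 1%g -> b != 1%g ->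
  ([set u; 1%g] != [set a; b]) && ([set 1%g; u] != [set a; b]).
Proof.
move=> a1 b1; apply/andP; split; apply/eqP => E.
  have: (1%g : gT) \in [set a; b] by rewrite -E !inE eqxx orbT.
  by rewrite !inE ![1%g == _]eq_sym (negbTE a1) (negbTE b1).
have: (1%g : gT) \in [set a; b] by rewrite -E !inE eqxx.
by rewrite !inE ![1%g == _]eq_sym (negbTE a1) (negbTE b1).
Qed.

Lemma pg_coprime (p : nat) (w z : gT) : (p.-group [set: gT])%g -> prime p ->
  w != 1%g -> coprime #[w]%g #[z]%g -> z = 1%g.
Proof.
move=> pG pp w1 C.
have [k Ek] := p_natP (mem_p_elt pG (in_setT w)).
have [j Ej] := p_natP (mem_p_elt pG (in_setT z)).
case: j Ej => [|j] Ej; first by apply/eqP; rewrite -order_eq1 Ej.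
case: k Ek => [|k] Ek; first by move: w1; rewrite -order_eq1 Ek eqxx.
move: C; rewrite Ek Ej coprime_pexpl // coprime_pexpr // prime_coprime //.
by rewrite dvdnn.
Qed.

End Grp.

Theorem mainTheorem11 (gT : finGroupType) :
  full_exponent [set: gT] ->
  (minimally_edge_connected (coprime_edges gT) <->
   exists2 p : nat, prime p & (p.-group [set: gT])%g).
Proof.
move=> [x _ ox]; split.
- move=> MEC; apply: NNPP => NE.
  have n0 : 0 < #|[set: gT]| by apply: cardG_gt0.
  case: (ltnP 1 #|[set: gT]|) => [n1|n1]; last first.
    apply: NE; exists 2 => //; rewrite /pgroup.
    by have -> : #|[set: gT]| = 1 by apply/eqP; rewrite eqn_leq n1 n0.
  pose p := pdiv #|[set: gT]|.
  have pp : prime p by apply: pdiv_prime.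
  have pd : p %| #|[set: gT]| by apply: pdiv_dvd.
  have [q [qp qd qnp]] : exists q, [/\ prime q, q %| #|[set: gT]| & q != p].
    apply: NNPP => NQ; apply: NE; exists p => //.
    apply/(pnatP _ n0) => q qp qd; rewrite inE.
    by apply/negPn/negP => qnp; apply: NQ; exists q; split.
  have [a _ oa] := Cauchy (G:=[set: gT]%G) pp pd.
  have [b _ ob] := Cauchy (G:=[set: gT]%G) qp qd.
  have a1 : a != 1%g by rewrite -order_eq1 oa gtn_eqF ?prime_gt1.
  have b1 : b != 1%g by rewrite -order_eq1 ob gtn_eqF ?prime_gt1.
  have ab : a != b.
    by apply/eqP => Eab; move: qnp; rewrite -ob -Eab oa eqxx.
  have abE : [set a; b] \in coprime_edges gT.
    by rewrite coprime_edgeP ab oa ob prime_coprime // dvdn_prime2 // eq_sym qnp.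
  have x1 : x != 1%g.
    rewrite -order_eq1 ox; apply/eqP => e1.
    have := dvdn_exponent (in_setT a); rewrite e1 oa dvdn1 => /eqP p1.
    by rewrite p1 in pp.
  have Hx : forall z : gT, coprime #[x]%g #[z]%g -> z = 1%g.
    move=> z C; apply/eqP; rewrite -order_eq1.
    have dz := dvdn_exponent (in_setT z); rewrite -ox in dz.
    by have := coprime_dvdl dz C; rewrite /coprime gcdnn.
  have xE : [set x; 1%g] \in coprime_edges gT.
    by rewrite coprime_edgeP x1 order1 coprimen1.
  have le1 : edge_connectivity (coprime_edges gT) <= 1.
    apply: (ec_le1 xE).
    by rewrite /edge_cutset sub1set xE (isolated_disc (iso Hx) x1).
  have gt0 : 0 < edge_connectivity (coprime_edges gT :\ [set a; b]).
    apply: ec_gt0.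
    - apply/card_gt0P; exists [set a; 1%g].
      have /andP[h1 _] := pair_ne a a1 b1.
      by rewrite in_setD1 h1 coprime_edgeP a1 order1 coprimen1.
    - apply: connected_via1 => u u1; rewrite !in_setD1.
      have /andP[h1 h2] := pair_ne u a1 b1.
      by rewrite h1 h2 /= coprime_edgeP u1 order1 coprimen1 one_edge.
    - by apply/card_gt1P; exists a, 1%g; rewrite !inE.
  rewrite MEC // in gt0.
  by case: (edge_connectivity (coprime_edges gT)) gt0 le1 => [|[]].
- move=> [p pp pG] e0 e0E.
  have [w w1 ->] : exists2 w : gT, w != 1%g & e0 = [set w; 1%g].
    move: e0E; rewrite inE => /existsP [y /existsP [z /and3P [yz /eqP -> C]]].
    case: (eqVneq y 1%g) => [y1|y1].
      exists z; first by move: yz; rewrite y1 eq_sym.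
      by rewrite y1 setUC.
    exists y => //; by rewrite (pg_coprime pG pp y1 C).
  have Hw : forall z : gT, coprime #[w]%g #[z]%g -> z = 1%g.
    by move=> z; apply: pg_coprime pG pp w1.
  have cut : forall E' S : {set {set gT}}, S \subset E' ->
      E' :\: S = coprime_edges gT :\ [set w; 1%g] ->
      edge_cutset E' S.
    move=> E' S sS ES; rewrite /edge_cutset sS ES.
    by rewrite (isolated_disc (iso Hw) w1).
  have ED : edge_connectivity (coprime_edges gT :\ [set w; 1%g]) = 0.
    apply/eqP; rewrite -leqn0 -(cards0 {set gT}).
    by apply: ec_le; [apply: sub0set | apply: cut; [apply: sub0set | rewrite setD0]].
  have wE : [set w; 1%g] \in coprime_edges gT.
    by rewrite coprime_edgeP w1 order1 coprimen1.
  have := ec_le1 wE (cut _ _ _ _).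
  rewrite sub1set wE ED => /(_ erefl erefl).
  by case: (edge_connectivity _) => [|[]].
Qed.
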